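(* Let $p$ be a prime and $b$ an integer with $1<b<\frac{p-1}{2}$. Then $|\mathrm{inv}_{1,b}|>4$.
   Context: Let $S=\mathbb{C}[x_1,x_2]$, $\zeta=e^{2\pi i/p}$, $G=\mathbb{Z}/p\mathbb{Z}=\langle\zeta\rangle$ acting on $S$ by $x_1\mapsto\zeta x_1$, $x_2\mapsto\zeta^bx_2$, with invariant ring $S^G_{1,b}$ (spanned by monomials $x_1^cx_2^d$ with $c+bd\equiv0\pmod p$). $\mathrm{inv}_{1,b}$ denotes the minimal set of monomial generators of $S^G_{1,b}$ as a $\mathbb{C}$-algebra: the nonconstant invariant monomials that are not a product of two nonconstant invariant monomials. *)

(* Defs.v *)
From mathcomp Require Import all_boot.
Set Implicit Arguments. Unset Strict Implicit. Unset Printing Implicit Defensive.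

(* A monomial x1^c x2^d of C[x1,x2] is encoded by its exponent pair (c,d). *)
Definition monomial := (nat * nat)%type.

Definition mon_mul (m1 m2 : monomial) : monomial := (m1.1 + m2.1, m1.2 + m2.2).

Definition nonconstant (m : monomial) : Prop := m <> (0, 0).

(* x1^c x2^d lies in S^G_{1,b} (G = Z/pZ acting by x1 -> zeta x1,
   x2 -> zeta^b x2) iff c + b d = 0 (mod p). *)
Definition invariant_mon (p b : nat) (m : monomial) : Prop :=
  (m.1 + b * m.2) %% p = 0.

Definition inv_1b (p b : nat) (m : monomial) : Prop :=
  nonconstant m /\ invariant_mon p b m /\
  ~ (exists m1 m2 : monomial,
        nonconstant m1 /\ invariant_mon p b m1 /\
        nonconstant m2 /\ invariant_mon p b m2 /\ m = mon_mul m1 m2).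

(* Main.v *)
Require Import Defs.
From mathcomp Require Import all_boot.
From mathcomp Require Import zify.
Set Implicit Arguments.

Lemma inv_dvd p b m : invariant_mon p b m <-> p %| m.1 + b * m.2.
Proof. by rewrite /invariant_mon /dvdn; split => [->|/eqP]. Qed.

Lemma G1 p b c d : 0 < b -> (c, d) <> (0, 0) -> invariant_mon p b (c, d) ->
  p <= c + b * d.
Proof.
move=> b0 nc /inv_dvd /= H; apply: dvdn_leq H.
case: c nc => [|c] //; case: d => [|d] // _; rewrite muln_gt0 b0 //.
Qed.

Lemma G2 p b d : prime p -> 0 < b -> b < p -> 0 < d -> invariant_mon p b (0, d) -> p <= d.
Proof.
move=> pp b0 bp d0 /inv_dvd /=; rewrite add0n Gauss_dvdr; first exact: dvdn_leq.
rewrite prime_coprime //; apply/negP => /(dvdn_leq b0); lia.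
Qed.

Theorem lemma3p15 (p b : nat) :
  prime p -> 1 < b -> 2 * b < p - 1 ->
  exists s : seq monomial,
    [/\ uniq s, 4 < size s & forall m, m \in s -> inv_1b p b m].
Proof.
move=> pp b1 bp.
have b0 : 0 < b by lia.
have bpp : b < p by lia.
have [a ap Ha] := Bezoutl b (prime_gt0 pp).
have g1 : gcdn p b = 1.
  apply/eqP; rewrite -/(coprime p b) prime_coprime //; apply/negP => /(dvdn_leq (ltnW b1)); lia.
rewrite g1 in Ha.
have a0 : 0 < a.
  case: a {ap} Ha => // /(dvdn_leq (isT : 0 < 1)) => H.
  have := prime_gt1 pp; lia.
exists [:: (p, 0); (0, p); (p - b, 1); (p - 2 * b, 2); (1, a)]; split.
- rewrite /= !inE !xpair_eqE; apply/and5P; split; apply/negP; lia.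
- by [].
have nc : forall c d, (c, d) <> (0, 0) -> 0 < c \/ 0 < d.
  by move=> [|c] [|d]; auto.
move=> m; rewrite !inE => /orP[|/orP[|/orP[|/orP[]]]] /eqP ->; split; try (by case; lia);
  (split; [apply/inv_dvd => /= | ]).
- by rewrite muln0 addn0.
- move=> [[c1 d1] [[c2 d2] [n1 [i1 [n2 [i2 E]]]]]];
  rewrite /mon_mul /= in E; case: E => E1 E2.
  have := G1 b0 n1 i1; have := G1 b0 n2 i2; clear n1 n2 i1 i2.
  move: E2; rewrite /=; case: d1 => // ; case: d2 => // _. lia.
- by rewrite add0n dvdn_mull.
- move=> [[c1 d1] [[c2 d2] [n1 [i1 [n2 [i2 E]]]]]];
  rewrite /mon_mul /= in E; case: E => E1 E2.
  have c10 : c1 = 0 by lia. have c20 : c2 = 0 by lia. subst c1 c2.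
  have [//|h2] := nc _ _ n2; have [//|h1] := nc _ _ n1.
  have := G2 pp b0 bpp h1 i1; have := G2 pp b0 bpp h2 i2; lia.
- by rewrite muln1 subnK ?dvdnn //; lia.
- move=> [[c1 d1] [[c2 d2] [n1 [i1 [n2 [i2 E]]]]]];
  rewrite /mon_mul /= in E; case: E => E1 E2.
  have := G1 b0 n1 i1; have := G1 b0 n2 i2; clear n1 n2 i1 i2.
  case: d1 E2 => [|[|]] //; case: d2 => [|[|]] //; lia.
- by have -> : p - 2 * b + b * 2 = p by lia.
- move=> [[c1 d1] [[c2 d2] [n1 [i1 [n2 [i2 E]]]]]];
  rewrite /mon_mul /= in E; case: E => E1 E2.
  have := G1 b0 n1 i1; have := G1 b0 n2 i2; clear n1 n2 i1 i2.
  case: d1 E2 => [|[|[|]]] //; case: d2 => [|[|[|]]] //; lia.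
- by rewrite mulnC.
- move=> [[c1 d1] [[c2 d2] [n1 [i1 [n2 [i2 E]]]]]];
  rewrite /mon_mul /= in E; case: E => E1 E2.
  have [c10|c20] : c1 = 0 \/ c2 = 0 by lia.
  + subst c1. have [//|h1] := nc _ _ n1.
    have := G2 pp b0 bpp h1 i1; lia.
  + subst c2. have [//|h2] := nc _ _ n2.
    have := G2 pp b0 bpp h2 i2; lia.
Qed.
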